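(* Assume we are either in the $\delta$-algebraic setting or in the $\delta$-arithmetic setting, and let $n\geq 2$. Let $\alpha:R^{\times}\times R^{n-1}\rightarrow R$ be a $\delta$-map and $\lambda\in R^{n-1}$ a row vector such that for all $(a_1,b_1),(a_2,b_2)\in R^{\times}\times R^{n-1}$, $$\alpha(a_1a_2,b_1+a_1b_2)=\alpha(a_1,b_1)+\alpha(a_2,b_2)+a_1^{-1}(1-a_2^{-1})b_1\lambda^t.$$ Then for all $a_1,a_2,a\in R^{\times}$ and $b\in R^{n-1}$, $$\alpha(a_1a_2,0)=\alpha(a_1,0)+\alpha(a_2,0),\qquad \alpha(a,b)=\alpha(a,0)-a^{-1}b\lambda^t.$$
   Context: Elements of $R^{n-1}$ are row vectors, $t$ denotes transpose, so $b\lambda^t\in R$. $\delta$-arithmetic setting: $p$ odd prime, $R$ the complete discrete valuation ring with maximal ideal $pR$ and residue field $\mathbb{F}_p^a$, $\phi$ the Frobenius lift on $R$, $\delta x=(\phi(x)-x^p)/p$; a $\delta$-map $R^{\times}\times R^{n-1}\to R^M$ is one of the form $(a,b)\mapsto F(a,b,\delta a,\delta b,\dots,\delta^m a,\delta^m b)$ with $F$ an $M$-tuple of restricted power series over $R$ ($p$-adically completed) in these variables and the inverse of the variable for $a$. $\delta$-algebraic setting: $R$ a $\delta$-closed (Kolchin's constrainedly closed) field of characteristic zero with derivation $\delta$; $\delta$-maps defined the same way with $F$ polynomial over $R$. *)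

(* Defs.v *)
From HB Require Import structures.
From mathcomp Require Import all_boot all_order all_algebra.
From mathcomp Require Import mpoly.
Set Implicit Arguments. Unset Strict Implicit. Unset Printing Implicit Defensive.
Import Order.TTheory GRing.Theory Num.Theory.
Local Open Scope ring_scope.

(* Jets.  For (a,b) in R^x * R^{n-1} and an order m, the variables of a *)
(* delta-map are  a, b_1..b_{n-1}, delta a, delta b, ..., delta^m a,     *)
(* delta^m b, and a^{-1}.  We list them in this order in a sequence.    *)
Definition jet_size (n m : nat) : nat := (m.+1 * (n.-1).+1).+1.

Definition jet_seq (R : unitRingType) (delta : R -> R) (n m : nat)
    (a : R) (b : 'rV[R]_(n.-1)) : seq R :=
  flatten [seq [seq iter j delta x | x <- a :: [seq b 0 i | i <- enum 'I_(n.-1)]]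
          | j <- iota 0 m.+1] ++ [:: a^-1].

Definition jet (R : unitRingType) (delta : R -> R) (n m : nat)
    (a : R) (b : 'rV[R]_(n.-1)) : 'I_(jet_size n m) -> R :=
  fun v => nth 0 (jet_seq delta m a b) v.

Definition derivation (R : nzRingType) (delta : R -> R) : Prop :=
  (forall x y, delta (x + y) = delta x + delta y) /\
  (forall x y, delta (x * y) = delta x * y + x * delta y).

(* A differential polynomial in N differential indeterminates y_0..y_{N-1}, *)
(* of order <= m, with coefficients in R: an ordinary polynomial in the     *)
(* N * (m+1) variables delta^j y_i (variable number i*(m+1)+j).  Its value  *)
Definition dpoly_eval (R : nzRingType) (K : nzRingType) (iota : R -> K)
    (deltaK : K -> K) (N m : nat) (f : {mpoly R[N * m.+1]}) (xs : seq K) : K :=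
  mmap iota (fun v : 'I_(N * m.+1) => iter (v %% m.+1) deltaK (nth 0 xs (v %/ m.+1))) f.

Definition constrainedly_closed (R : idomainType) (delta : R -> R) : Prop :=
  forall (N m : nat) (fs : seq {mpoly R[N * m.+1]}) (g : {mpoly R[N * m.+1]}),
    (exists (K : fieldType) (deltaK : K -> K) (iota : {rmorphism R -> K}),
       derivation deltaK /\ (forall x, deltaK (iota x) = iota (delta x)) /\
       exists xs : seq K, size xs = N /\
         all (fun f => dpoly_eval iota deltaK f xs == 0) fs /\
         dpoly_eval iota deltaK g xs != 0) ->
    exists xs : seq R, size xs = N /\
      all (fun f => dpoly_eval idfun delta f xs == 0) fs /\
      dpoly_eval idfun delta g xs != 0.

Definition delta_alg_setting (R : idomainType) (delta : R -> R) : Prop :=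
  (forall x : R, x != 0 -> x \is a GRing.unit) /\
  [pchar R] =i pred0 /\ derivation delta /\ constrainedly_closed delta.

Definition delta_map_alg (R : idomainType) (delta : R -> R) (n : nat)
    (alpha : R -> 'rV[R]_(n.-1) -> R) : Prop :=
  exists (m : nat) (F : {mpoly R[jet_size n m]}),
    forall a b, a \is a GRing.unit -> alpha a b = F.@[@jet _ delta n m a b].

Definition pdvd (R : nzRingType) (p N : nat) (x : R) : Prop :=
  exists y : R, x = (p%:R) ^+ N * y.

(* R is a complete discrete valuation ring with maximal ideal pR and       *)
(* residue field an algebraic closure of F_p.                              *)
Definition cdvr_p (R : idomainType) (p : nat) : Prop :=
  (p%:R : R) != 0 /\ (p%:R : R) \isn't a GRing.unit /\
  (forall x : R, x != 0 -> exists (u : R) (k : nat),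
      u \is a GRing.unit /\ x = u * (p%:R) ^+ k) /\
  (forall s : nat -> R, (forall N, pdvd p N (s N.+1 - s N)) ->
     exists x, forall N, pdvd p N (x - s N)) /\
  (forall f : {poly R}, (1 < size f)%N -> lead_coef f \is a GRing.unit ->
     exists x, pdvd p 1 f.[x]) /\
  (forall x : R, exists f : {poly int}, f \is monic /\
     pdvd p 1 (map_poly (fun z : int => z%:~R) f).[x]).

Definition delta_arith_setting (R : idomainType) (p : nat)
    (phi : {rmorphism R -> R}) (delta : R -> R) : Prop :=
  prime p /\ odd p /\ cdvr_p R p /\
  (forall x, pdvd p 1 (phi x - x ^+ p)) /\
  (forall x, p%:R * delta x = phi x - x ^+ p).

(* Restricted power series in k variables: coefficient family c with     *)
(* c_nu -> 0 p-adically.                                                  *)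
Definition restricted (R : nzRingType) (p k : nat) (c : {ffun 'I_k -> nat} -> R) : Prop :=
  forall N, exists S : seq {ffun 'I_k -> nat},
    forall nu, nu \notin S -> pdvd p N (c nu).

Definition ps_evaluates (R : nzRingType) (p k : nat) (c : {ffun 'I_k -> nat} -> R)
    (x : 'I_k -> R) (v : R) : Prop :=
  forall N, exists S : seq {ffun 'I_k -> nat},
    (forall nu, nu \notin S -> pdvd p N (c nu)) /\
    pdvd p N (v - \sum_(nu <- S) c nu * \prod_(i < k) x i ^+ nu i).

Definition delta_map_arith (R : idomainType) (p : nat) (delta : R -> R) (n : nat)
    (alpha : R -> 'rV[R]_(n.-1) -> R) : Prop :=
  exists (m : nat) (c : {ffun 'I_(jet_size n m) -> nat} -> R),
    restricted p c /\
    forall a b, a \is a GRing.unit -> ps_evaluates p c (@jet _ delta n m a b) (alpha a b).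

(* Main.v *)
Require Import Defs.
From HB Require Import structures.
From mathcomp Require Import all_boot all_order all_algebra.
From mathcomp Require Import mpoly.
From mathcomp Require Import ring.
Import Order.TTheory GRing.Theory Num.Theory.
Local Open Scope ring_scope.

Theorem lemma3p7 (R : idomainType) (delta : R -> R) (n : nat) (hn : (2 <= n)%N)
    (alpha : R -> 'rV[R]_(n.-1) -> R) (lambda : 'rV[R]_(n.-1)) :
  ((delta_alg_setting delta /\ delta_map_alg delta alpha) \/
   (exists (p : nat) (phi : {rmorphism R -> R}),
      delta_arith_setting p phi delta /\ delta_map_arith p delta alpha)) ->
  (forall (a1 a2 : R) (b1 b2 : 'rV[R]_(n.-1)),
      a1 \is a GRing.unit -> a2 \is a GRing.unit ->
      alpha (a1 * a2) (b1 + a1 *: b2) =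
        alpha a1 b1 + alpha a2 b2 + a1^-1 * (1 - a2^-1) * (b1 *m lambda^T) 0 0) ->
  (forall a1 a2 : R, a1 \is a GRing.unit -> a2 \is a GRing.unit ->
      alpha (a1 * a2) 0 = alpha a1 0 + alpha a2 0) /\
  (forall (a : R) (b : 'rV[R]_(n.-1)), a \is a GRing.unit ->
      alpha a b = alpha a 0 - a^-1 * (b *m lambda^T) 0 0).
Proof.
move=> hset H.
have two0 : (2%:R : R) != 0.
  case: hset => [[[_ [hc _]] _]|[p [phi [[pp [po [[_ [pnu _]] _]]] _]]]].
    apply/negP => /eqP h2.
    have : (2 \in [pchar R])%N by apply/andP; split => //; apply/eqP.
    by rewrite hc.
  apply/negP => /eqP h2; move: pnu.
  have -> : (p%:R : R) = 1.
    rewrite -[p](odd_double_half) po natrD -mul2n natrM h2 mul0r addr0.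
    by [].
  by rewrite unitr1.
pose L (b : 'rV[R]_(n.-1)) := (b *m lambda^T) 0 0.
split.
  move=> a1 a2 u1 u2.
  have := H a1 a2 0 0 u1 u2.
  by rewrite scaler0 addr0 /= mul0mx mxE mulr0 addr0.
move=> a b ua.
have add1 : forall b1 b2, alpha 1 (b1 + b2) = alpha 1 b1 + alpha 1 b2.
  move=> b1 b2; have := H 1 1 b1 b2 (unitr1 R) (unitr1 R).
  by rewrite mul1r scale1r invr1 subrr mulr0 mul0r addr0.
have hsplit : forall a c, a \is a GRing.unit ->
    alpha a (a *: c) = alpha a 0 + alpha 1 c.
  move=> a' c ua'; have := H a' 1 0 c ua' (unitr1 R).
  by rewrite mulr1 add0r invr1 subrr mulr0 mul0r addr0.
have hsplit2 : forall a c, a \is a GRing.unit ->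
    alpha a c = alpha 1 c + alpha a 0 + (1 - a^-1) * L c.
  move=> a' c ua'; have := H 1 a' c 0 (unitr1 R) ua'.
  by rewrite mul1r scaler0 addr0 invr1 mul1r.
have hL : forall c, alpha 1 c = - L c.
  move=> c.
  have um1 : (-1 : R) \is a GRing.unit by rewrite unitrN unitr1.
  have e1 := hsplit (-1) c um1.
  have e2 := hsplit2 (-1) ((-1) *: c) um1.
  have a0 : alpha 1 0 = 0.
    have := add1 0 0; rewrite addr0 => h.
    by apply: (addrI (alpha 1 0)); rewrite addr0 -h.
  have aN : alpha 1 (- c) = - alpha 1 c.
    apply/eqP; rewrite -subr_eq0 opprK; apply/eqP.
    by rewrite -add1 addNr.
  have LN : L ((-1) *: c) = - L c.
    by rewrite /L scaleN1r mulNmx mxE.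
  rewrite e1 scaleN1r aN -scaleN1r LN invrN invr1 opprK in e2.
  have : 2%:R * (alpha 1 c + L c) = 0.
    apply/eqP; rewrite -subr_eq0 subr0; apply/eqP.
    move/eqP: e2; rewrite -subr_eq0 => /eqP e2.
    rewrite -e2; ring.
  move/eqP; rewrite mulf_eq0 (negbTE two0) /= addr_eq0 => /eqP //.
have := hsplit a (a^-1 *: b) ua.
rewrite scalerA mulrV // scale1r => ->.
rewrite hL /L -scalemxAl mxE; congr (_ - _).
Qed.
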